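(* Let $\alpha \in (0,1)$ and $x \in I_\alpha$. Then $x \in \mathbb Q$ if and only if there is an integer $N \ge 0$ such that $T_\alpha^N(x) = 1$.
   Context: For $\alpha \in (0,1)$ let $D_\alpha = \bigcup_{n \ge 1} \big[ \frac{1}{n+\alpha}, \frac1n \big]$, $D_\alpha^{\mathsf c} = [0,1]\setminus D_\alpha$, $I_\alpha = [\min\{\alpha,1-\alpha\},1]$, and $T_\alpha : I_\alpha \to I_\alpha$, $T_\alpha(x) = \frac1x - \lfloor \frac1x \rfloor$ if $x \in D_\alpha^{\mathsf c}$, $T_\alpha(x) = 1 + \lfloor \frac1x \rfloor - \frac1x$ if $x \in D_\alpha$. *)

(* Defs.v *)
From Stdlib Require Import Reals ClassicalDescription.
Open Scope R_scope.

(* floor function: Int_part r = up r - 1 = floor r *)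
Definition floorR (r : R) : R := IZR (Int_part r).

Definition in_D (alpha x : R) : Prop :=
  exists n : nat, (1 <= n)%nat /\ 1 / (INR n + alpha) <= x /\ x <= 1 / INR n.

Definition in_I (alpha x : R) : Prop := Rmin alpha (1 - alpha) <= x /\ x <= 1.

(* T_alpha; defined classically on all of R, only used on I_alpha *)
Definition T (alpha x : R) : R :=
  match excluded_middle_informative (in_D alpha x) with
  | left _ => 1 + floorR (1 / x) - 1 / x
  | right _ => 1 / x - floorR (1 / x)
  end.

Definition is_rational (x : R) : Prop :=
  exists (p q : Z), q <> 0%Z /\ x = IZR p / IZR q.

(* Main.v *)
Require Import Defs.
From Stdlib Require Import Reals ZArith Lia Lra ClassicalDescription.
Open Scope R_scope.

Lemma floor_unique (r : R) (k : Z) : IZR k <= r < IZR k + 1 -> Int_part r = k.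
Proof.
  intros [H1 H2]. destruct (base_Int_part r) as [B1 B2].
  assert (IZR (Int_part r) < IZR (k + 1)) by (rewrite plus_IZR; lra).
  assert (IZR k < IZR (Int_part r + 1)) by (rewrite plus_IZR; lra).
  apply lt_IZR in H. apply lt_IZR in H0. lia.
Qed.

Lemma T_bounds (alpha x : R) : 0 < alpha < 1 -> 0 < x <= 1 -> 0 < T alpha x <= 1.
Proof.
  intros Ha Hx. unfold T.
  assert (Hyx : (1 / x) * x = 1) by (field; lra).
  assert (Hxy : x = / (1/x)) by (field; lra).
  assert (Hyi : 1 / x = / x) by (field; lra).
  set (y := 1 / x) in *.
  assert (Hy : 1 <= y) by nra.
  destruct excluded_middle_informative as [HD|HD].
  - destruct HD as (n & Hn & H1 & H2).
    assert (HnR : 1 <= INR n) by (apply (le_INR 1); exact Hn).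
    assert (Hl : INR n <= y).
    { rewrite Hyi, <- (Rinv_inv (INR n)). apply Rinv_le_contravar; [lra|].
      unfold Rdiv in H2. rewrite Rmult_1_l in H2. exact H2. }
    assert (Hu : y <= INR n + alpha).
    { rewrite Hyi, <- (Rinv_inv (INR n + alpha)). apply Rinv_le_contravar.
      - apply Rinv_0_lt_compat; lra.
      - unfold Rdiv in H1. rewrite Rmult_1_l in H1. exact H1. }
    assert (Hf : Int_part y = Z.of_nat n).
    { apply floor_unique. rewrite <- INR_IZR_INZ. lra. }
    unfold floorR. rewrite Hf, <- INR_IZR_INZ. lra.
  - destruct (base_Int_part y) as [B1 B2].
    set (F := Int_part y) in *.
    assert (HF : (1 <= F)%Z).
    { assert (0 < IZR F) by lra. apply lt_IZR in H. lia. }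
    unfold floorR. fold F.
    destruct (Rle_lt_dec (y - IZR F) alpha) as [Hle|Hlt]; [|lra].
    exfalso. apply HD. exists (Z.to_nat F). split; [lia|].
    rewrite INR_IZR_INZ, Znat.Z2Nat.id by lia.
    assert (0 < IZR F) by (apply IZR_lt; lia).
    split.
    + unfold Rdiv. rewrite Rmult_1_l, Hxy. apply Rinv_le_contravar; lra.
    + unfold Rdiv. rewrite Rmult_1_l, Hxy. apply Rinv_le_contravar; lra.
Qed.

Lemma T_form (alpha x : R) : exists a b : Z, (b = 1 \/ b = -1)%Z /\
  T alpha x = IZR a + IZR b * (1 / x).
Proof.
  unfold T, floorR. destruct excluded_middle_informative.
  - exists (1 + Int_part (1/x))%Z, (-1)%Z. split; [lia|]. rewrite plus_IZR. lra.
  - exists (- Int_part (1/x))%Z, 1%Z. split; [lia|]. rewrite opp_IZR. lra.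
Qed.

Lemma iter_shift (f : R -> R) N x : Nat.iter (S N) f x = Nat.iter N f (f x).
Proof. apply Nat.iter_succ_r. Qed.

Lemma descent (alpha : R) : 0 < alpha < 1 -> forall n p q,
  (0 < p <= q)%Z -> (q <= Z.of_nat n)%Z ->
  exists N, Nat.iter N (T alpha) (IZR p / IZR q) = 1.
Proof.
  intros Ha n. induction n as [|n IH]; intros p q Hpq Hqn.
  - lia.
  - assert (Hq0 : IZR q <> 0) by (apply not_0_IZR; lia).
    destruct (Z.eq_dec p q) as [->|Hne].
    + exists 0%nat. simpl. field. exact Hq0.
    + assert (Hp : 0 < IZR p) by (apply IZR_lt; lia).
      assert (Hq : 0 < IZR q) by (apply IZR_lt; lia).
      assert (Hpq' : IZR p <= IZR q) by (apply IZR_le; lia).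
      set (x := IZR p / IZR q).
      assert (Hx : 0 < x <= 1).
      { unfold x. split.
        - apply Rdiv_lt_0_compat; lra.
        - apply Rmult_le_reg_r with (IZR q); [lra|].
          unfold Rdiv. rewrite Rmult_assoc, Rinv_l by lra. lra. }
      destruct (T_bounds alpha x Ha Hx) as [T1 T2].
      destruct (T_form alpha x) as (a & b & _ & Hf).
      set (z := (a * p + b * q)%Z).
      assert (Hz : T alpha x = IZR z / IZR p).
      { rewrite Hf. unfold z, x. rewrite plus_IZR, !mult_IZR. field. lra. }
      rewrite Hz in T1, T2.
      assert (Hz0 : 0 < IZR z).
      { replace (IZR z) with (IZR z / IZR p * IZR p) by (field; lra). nra. }
      assert (Hz1 : IZR z <= IZR p).
      { replace (IZR z) with (IZR z / IZR p * IZR p) by (field; lra). nra. }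
      apply lt_IZR in Hz0. apply le_IZR in Hz1.
      destruct (IH z p) as [N HN]; [lia|lia|].
      exists (S N). rewrite iter_shift. rewrite Hz. exact HN.
Qed.

Lemma rat_back (alpha y : R) : is_rational (T alpha y) -> is_rational y.
Proof.
  intros (P & Q & HQ & HP).
  destruct (Req_dec y 0) as [->|Hy0].
  - exists 0%Z, 1%Z. split; [lia|]. field.
  - destruct (T_form alpha y) as (a & b & Hb & Hf).
    assert (Hinv : / y = IZR (b * (P - a * Q)) / IZR Q).
    { assert (IZR Q <> 0) by (apply not_0_IZR; exact HQ).
      rewrite mult_IZR, minus_IZR, mult_IZR.
      assert (E : IZR b * (1/y) = IZR P / IZR Q - IZR a) by lra.
      assert (Hbb : IZR b * IZR b = 1) by (destruct Hb as [-> | ->]; simpl; lra).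
      replace (/ y) with (IZR b * IZR b * (1/y)) by (rewrite Hbb; field; exact Hy0).
      rewrite Rmult_assoc, E. field. exact H. }
    assert (HP' : IZR (b * (P - a * Q)) <> 0).
    { intro E. rewrite E in Hinv. apply (Rinv_neq_0_compat y Hy0). rewrite Hinv. unfold Rdiv. ring. }
    assert (HQ' : IZR Q <> 0) by (apply not_0_IZR; exact HQ).
    exists Q, (b * (P - a * Q))%Z. split.
    + intro E. apply HP'. rewrite E. reflexivity.
    + rewrite <- (Rinv_inv y), Hinv. field. split; assumption.
Qed.

Theorem proposition2p1 (alpha x : R) :
  0 < alpha < 1 -> in_I alpha x ->
  (is_rational x <-> exists N : nat, Nat.iter N (T alpha) x = 1).
Proof.
  intros Ha [HI1 HI2].
  assert (Hm : 0 < Rmin alpha (1 - alpha)) by (unfold Rmin; destruct Rle_dec; lra).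
  split.
  - intros (p & q & Hq & Hx).
    assert (Hpos : exists p' q', (0 < q')%Z /\ x = IZR p' / IZR q').
    { destruct (Z_lt_le_dec 0 q).
      - exists p, q. auto.
      - exists (-p)%Z, (-q)%Z. split; [lia|]. rewrite Hx, !opp_IZR. field.
        apply not_0_IZR; exact Hq. }
    clear p q Hq Hx. destruct Hpos as (p & q & Hq & Hx).
    assert (HqR : 0 < IZR q) by (apply IZR_lt; lia).
    assert (Hpx : IZR p = x * IZR q) by (rewrite Hx; field; lra).
    assert (0 < IZR p) by (rewrite Hpx; nra).
    assert (IZR p <= IZR q) by (rewrite Hpx; nra).
    apply lt_IZR in H. apply le_IZR in H0.
    rewrite Hx. apply (descent alpha Ha (Z.to_nat q)); lia.
  - intros [N HN].
    assert (Hgen : forall N y, is_rational (Nat.iter N (T alpha) y) -> is_rational y).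
    { intros M. induction M as [|M IH]; intros y Hy; [exact Hy|].
      rewrite iter_shift in Hy. apply (rat_back alpha). apply IH. exact Hy. }
    apply (Hgen N). rewrite HN. exists 1%Z, 1%Z. split; [lia|]. field.
Qed.
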